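(* Let $a,b,u,v$ be integers with $b>a\ge2$ and $u,v\ge2$, and set $X:=ab-a-b$. Consider the properties: (1) $a$, $b$ and $uv-1$ are pairwise coprime; (2) $\frac{1}{a}+\frac{1}{b}+\frac{v}{uv-1}>1$; (3) $vab-1=(uv-1)X$; (4) $a+b+u+v=4+(v-1)\bigl[ab-(u-1)X\bigr]$. If $a,b,u,v$ satisfy (1)–(4), then the triple $(a,b,uv-1)$ is one of $(5,7,3)$, $(4,11,3)$, $(2,7,11)$. If $a,b,u,v$ satisfy (1)–(3), then the triple $(a,b,uv-1)$ is one of $(5,7,3)$, $(4,11,3)$, $(2,7,11)$, $(3,14,5)$, $(3,10,7)$, $(4,5,9)$, $(3,8,11)$, $(3,7,19)$, $(2,9,5)$, or $(2,3,6v-1)$ (with $u=6$). *)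

(* Defs.v *)
From mathcomp Require Import all_boot all_order all_algebra.
Set Implicit Arguments. Unset Strict Implicit. Unset Printing Implicit Defensive.
Import Order.TTheory GRing.Theory Num.Theory.
Local Open Scope ring_scope.

Definition Xab (a b : int) : int := a * b - a - b.

Definition prop1 (a b u v : int) : Prop :=
  [/\ coprimez a b, coprimez a (u * v - 1) & coprimez b (u * v - 1)].

Definition prop2 (a b u v : int) : Prop :=
  1 < (a%:~R : rat)^-1 + (b%:~R : rat)^-1 + (v%:~R : rat) / ((u * v - 1)%:~R : rat).

Definition prop3 (a b u v : int) : Prop :=
  v * a * b - 1 = (u * v - 1) * Xab a b.

Definition prop4 (a b u v : int) : Prop :=
  a + b + u + v = 4 + (v - 1) * (a * b - (u - 1) * Xab a b).

(* Main.v *)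
Require Import Defs.
From mathcomp Require Import all_boot all_order all_algebra.
From mathcomp Require Import zify ring lra.
Import Order.TTheory GRing.Theory Num.Theory.
Local Open Scope ring_scope.

Lemma bounds (a b u v : int) :
  2 <= a -> a < b -> 2 <= u -> 2 <= v -> prop3 a b u v ->
  (u * Xab a b - a * b = 0 /\ a = 2 /\ b = 3 /\ u = 6) \/
  (0 < u * Xab a b - a * b /\ Xab a b - 1 = v * (u * Xab a b - a * b) /\ a <= 13 /\ b <= 14 /\ u <= 4).
Proof.
move=> ha hab hu hv; rewrite /prop3 => H3.
have EX : Xab a b = a * b - a - b by [].
move: H3 EX; set X := Xab a b; clearbody X => H3 EX.
have E1 : X - 1 = v * (u * X - a * b) by rewrite mulrBr; lia.
move: E1; set k := u * X - a * b => E1.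
have E2 : a * b = u * X - k by rewrite /k; lia.
clearbody k.
have X1 : 1 <= X.
  have : 2 <= (a - 1) * (b - 1) by nia.
  rewrite mulrBr !mulrBl; lia.
have k0 : 0 <= k.
  have v0 : 0 < v by lia.
  by rewrite -(pmulr_rge0 _ v0) -E1; lia.
have [k00|kpos] : k = 0 \/ 0 < k by lia.
  left. have X11 : X = 1 by lia.
  have a2 : a = 2.
    have [//|a3] : a = 2 \/ 3 <= a by lia.
    have : 6 <= (a - 1) * (b - 1) by nia.
    rewrite mulrBr !mulrBl; lia.
  subst a. have b3 : b = 3 by lia.
  subst b. split; first by [].
  do 2 split=> //. lia.
right; split=> //; split=> //.
have X0 : 0 < X by lia.
have E3 : (u - 1) * X = a + b + k by rewrite mulrBl; lia.
have kb : 2 * k <= X - 1 by rewrite E1 ler_pM2r //; lia.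
have P1 : a * b >= 3 * a + 2 * b - 6.
  have := mulr_ge0 (_ : 0 <= a - 2) (_ : 0 <= b - 3); rewrite mulrBr !mulrBl.
  by move=> /(_ ltac:(lia) ltac:(lia)); lia.
have u4 : u <= 4.
  have [//|u5] : u <= 4 \/ 5 <= u by lia.
  have : 4 * X <= (u - 1) * X by rewrite ler_pM2r //; lia.
  lia.
have [u2|u3] : u = 2 \/ 3 <= u by lia.
  suff : b <= 14 by lia.
  subst u.
  have Ev : (v - 1) * k = a + b - 1 by rewrite mulrBl; lia.
  have [a2|[a3|a4]] : a = 2 \/ a = 3 \/ 4 <= a by lia.
  - subst a; lia.
  - subst a. have [v2|v3] : v = 2 \/ 3 <= v by lia.
      subst v; lia.
    have [//|b15] : b <= 14 \/ 15 <= b by lia.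
    exfalso.
    have := mulr_ge0 (_ : 0 <= v - 3) (_ : 0 <= b - 15); rewrite mulrBr !mulrBl.
    move=> /(_ ltac:(lia) ltac:(lia)).
    have Ek : k = b - 6 by lia.
    move: Ev; rewrite Ek mulrBr !mulrBl. lia.
  - have : 1 * k <= (v - 1) * k by rewrite ler_pM2r //; lia.
    move=> Hk.
    have [//|b12] : b <= 14 \/ 12 <= b by lia.
    exfalso.
    have := mulr_ge0 (_ : 0 <= a - 4) (_ : 0 <= b - 12); rewrite mulrBr !mulrBl.
    move=> /(_ ltac:(lia) ltac:(lia)).
    lia.
have : 2 * X <= (u - 1) * X by rewrite ler_pM2r //; lia.
lia.
Qed.

Definition sols : seq (int * int * int * int) :=
  [:: (5,7,2,2); (4,11,2,2); (2,7,3,4); (3,14,2,3); (3,10,2,4); (4,5,2,5);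
      (3,8,2,6); (3,7,2,10); (2,9,3,2)].

Definition check (a b u : int) : bool :=
  let X := Xab a b in let k := u * X - a * b in let v := ((X - 1) %/ k)%Z in
  [&& 2 <= a, a < b, 0 < k, 2 <= v, X - 1 == v * k, coprimez a b,
      coprimez a (u * v - 1) & coprimez b (u * v - 1)] ==> ((a, b, u, v) \in sols).

Lemma check_all : all (fun a => all (fun b => all (fun u => check a b u)
   (map Posz (iota 2 3))) (map Posz (iota 3 12))) (map Posz (iota 2 12)).
Proof. vm_compute. reflexivity. Qed.

Lemma in_range (x : int) (lo n : nat) : (lo%:Z <= x) -> x < (lo + n)%:Z ->
  x \in map Posz (iota lo n).
Proof.
case: x => m h1 h2; last by exfalso; lia.
apply/mapP; exists m => //; rewrite mem_iota; lia.
Qed.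

Lemma core (a b u v : int) :
  2 <= a -> a < b -> 2 <= u -> 2 <= v -> prop1 a b u v -> prop3 a b u v ->
  (a, b, u, v) \in sols \/ (a = 2 /\ b = 3 /\ u = 6).
Proof.
move=> ha hab hu hv H1 H3.
case: (bounds _ _ _ _ ha hab hu hv H3) => [[_ [ea [eb eu]]]|[kpos [E [a13 [b14 u4]]]]]; first by right; split=> //; split.
left.
have Hv : v = ((Xab a b - 1) %/ (u * Xab a b - a * b))%Z.
  by rewrite E mulzK //; lia.
have := check_all.
move=> /allP /(_ a (in_range a 2 12 ltac:(lia) ltac:(lia))).
move=> /allP /(_ b (in_range b 3 12 ltac:(lia) ltac:(lia))).
move=> /allP /(_ u (in_range u 2 3 ltac:(lia) ltac:(lia))).
rewrite /check -Hv. case: H1 => c1 c2 c3.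
rewrite ha hab kpos hv c1 c2 c3 -E eqxx /=. by [].
Qed.

Ltac solve_disj :=
  repeat match goal with
  | |- _ \/ _ => first [left; solve [vm_compute; reflexivity] | right]
  end; vm_compute; reflexivity.

Theorem proposition3p3 (a b u v : int) :
  2 <= a -> a < b -> 2 <= u -> 2 <= v ->
  (prop1 a b u v -> prop2 a b u v -> prop3 a b u v -> prop4 a b u v ->
     (a, b, u * v - 1) = (5, 7, 3)
  \/ (a, b, u * v - 1) = (4, 11, 3)
  \/ (a, b, u * v - 1) = (2, 7, 11))
  /\
  (prop1 a b u v -> prop2 a b u v -> prop3 a b u v ->
     (a, b, u * v - 1) = (5, 7, 3)
  \/ (a, b, u * v - 1) = (4, 11, 3)
  \/ (a, b, u * v - 1) = (2, 7, 11)
  \/ (a, b, u * v - 1) = (3, 14, 5)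
  \/ (a, b, u * v - 1) = (3, 10, 7)
  \/ (a, b, u * v - 1) = (4, 5, 9)
  \/ (a, b, u * v - 1) = (3, 8, 11)
  \/ (a, b, u * v - 1) = (3, 7, 19)
  \/ (a, b, u * v - 1) = (2, 9, 5)
  \/ ((a, b, u * v - 1) = (2, 3, 6 * v - 1) /\ u = 6)).
Proof.
move=> ha hab hu hv.
split=> [H1 H2 H3 H4|H1 H2 H3].
all: case: (core _ _ _ _ ha hab hu hv H1 H3) => [Hin|[ea [eb eu]]].
all: try (subst a b u; first [move: H4; rewrite /prop4 /Xab; lia | do 9 right; split=> //]).
all: move: Hin; rewrite /sols !inE.
all: do ?[case/orP => [/eqP [ea eb eu ev]|] ]; try move/eqP=> [ea eb eu ev]; subst a b u v.
all: try solve_disj.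
all: move: H4; rewrite /prop4 /Xab; lia.
Qed.
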